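(* Let $m,n$ be positive integers and let $g,h$ be orientation-preserving $C^2$ diffeomorphisms of $I=[0,1]$ satisfying $gh^mg^{-1}=h^n$. Then $h$ and $ghg^{-1}$ commute. *)

(* Defs.v *)
From Stdlib Require Import Reals.
From Coquelicot Require Import Coquelicot.
Open Scope R_scope.

Definition inI (x : R) : Prop := 0 <= x <= 1.

Definition has_deriv_I (f : R -> R) (x l : R) : Prop :=
  filterlim (fun y => (f y - f x) / (y - x))
            (within (fun y => inI y /\ y <> x) (locally x)) (locally l).

Definition C2_on_I (f : R -> R) : Prop :=
  exists f1 f2 : R -> R,
    (forall x, inI x -> has_deriv_I f x (f1 x)) /\
    (forall x, inI x -> has_deriv_I f1 x (f2 x)) /\
    (forall x, inI x -> filterlim f2 (within inI (locally x)) (locally (f2 x))).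

Definition inverse_on_I (f finv : R -> R) : Prop :=
  (forall x, inI x -> inI (f x)) /\
  (forall x, inI x -> inI (finv x)) /\
  (forall x, inI x -> finv (f x) = x) /\
  (forall x, inI x -> f (finv x) = x).

Definition orient_pres_C2_diffeo (f : R -> R) : Prop :=
  (exists finv, inverse_on_I f finv /\ C2_on_I f /\ C2_on_I finv) /\
  (forall x y, inI x -> inI y -> x < y -> f x < f y).

Fixpoint fiter (n : nat) (h : R -> R) (x : R) : R :=
  match n with O => x | S k => h (fiter k h x) end.

(* Main.v *)
Require Import Defs.
From Stdlib Require Import Reals.
From Coquelicot Require Import Coquelicot.
From Stdlib Require Import Lra Lia Classical.
Open Scope R_scope.

Lemma lim_ED (P : R -> Prop) (f : R -> R) (x l : R) :
  filterlim f (within P (locally x)) (locally l) ->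
  forall eps, 0 < eps -> exists del, 0 < del /\
    forall y, P y -> Rabs (y - x) < del -> Rabs (f y - l) < eps.
Proof.
  intros H eps Heps.
  destruct (proj1 (filterlim_locally f l) H (mkposreal eps Heps)) as [d Hd].
  exists d; split; [apply cond_pos|].
  intros y Py Hy. apply (Hd y Hy Py).
Qed.

Definition contI (f : R -> R) (x : R) : Prop :=
  forall eps, 0 < eps -> exists del, 0 < del /\
    forall y, inI y -> Rabs (y - x) < del -> Rabs (f y - f x) < eps.

Lemma deriv_ED f x l : has_deriv_I f x l ->
  forall eps, 0 < eps -> exists del, 0 < del /\
    forall y, inI y -> y <> x -> Rabs (y - x) < del ->
      Rabs ((f y - f x) / (y - x) - l) < eps.
Proof.
  intros H eps Heps.
  destruct (lim_ED _ _ _ _ H eps Heps) as [d [Hd H1]].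
  exists d; split; auto.
Qed.

Lemma deriv_cont f x l : has_deriv_I f x l -> contI f x.
Proof.
  intros H eps Heps.
  destruct (deriv_ED f x l H 1 Rlt_0_1) as [d [Hd H1]].
  exists (Rmin d (eps / (Rabs l + 1))); split.
  { apply Rmin_glb_lt; auto. apply Rdiv_lt_0_compat; auto.
    pose proof (Rabs_pos l); lra. }
  intros y Hy Hyx.
  destruct (Req_dec y x) as [->|Hne].
  { rewrite Rminus_diag, Rabs_R0; auto. }
  assert (Hyx1 : Rabs (y - x) < d) by (eapply Rlt_le_trans; [exact Hyx| apply Rmin_l]).
  assert (Hyx2 : Rabs (y - x) < eps / (Rabs l + 1))
    by (eapply Rlt_le_trans; [exact Hyx| apply Rmin_r]).
  specialize (H1 y Hy Hne Hyx1).
  assert (Hq : Rabs ((f y - f x) / (y - x)) < Rabs l + 1).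
  { pose proof (Rabs_triang_inv ((f y - f x) / (y - x)) l). lra. }
  assert (E : f y - f x = (f y - f x) / (y - x) * (y - x)).
  { field. lra. }
  rewrite E, Rabs_mult.
  assert (Hp : 0 < Rabs l + 1) by (pose proof (Rabs_pos l); lra).
  assert (Hpos : 0 < Rabs (y - x)) by (apply Rabs_pos_lt; lra).
  apply Rlt_le_trans with ((Rabs l + 1) * Rabs (y - x)).
  { apply Rmult_lt_compat_r; auto. }
  apply Rle_trans with ((Rabs l + 1) * (eps / (Rabs l + 1))).
  { apply Rmult_le_compat_l; lra. }
  right; field; lra.
Qed.

Definition clamp (x : R) : R := Rmax 0 (Rmin 1 x).

Lemma clamp_I x : inI (clamp x).
Proof. unfold clamp, inI, Rmax, Rmin.
  destruct (Rle_dec 1 x); destruct (Rle_dec 0 _); lra. Qed.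

Lemma clamp_id x : inI x -> clamp x = x.
Proof. unfold clamp, inI, Rmax, Rmin; intros.
  destruct (Rle_dec 1 x); destruct (Rle_dec 0 _); lra. Qed.

Lemma clamp_lip x y : Rabs (clamp x - clamp y) <= Rabs (x - y).
Proof. unfold clamp, Rmax, Rmin.
  destruct (Rle_dec 1 x); destruct (Rle_dec 1 y);
  repeat (destruct (Rle_dec 0 _)); unfold Rabs;
  repeat (destruct (Rcase_abs _)); lra. Qed.

Lemma clamp_cont f : (forall x, inI x -> contI f x) ->
  forall x, continuity_pt (fun t => f (clamp t)) x.
Proof.
  intros Hc x eps Heps.
  destruct (Hc (clamp x) (clamp_I x) eps Heps) as [d [Hd H1]].
  exists d; split; auto.
  intros y [_ Hy]. simpl in *. unfold R_dist in *.
  apply H1. apply clamp_I.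
  eapply Rle_lt_trans; [apply clamp_lip| exact Hy].
Qed.

Lemma clamp_deriv f x l : 0 < x < 1 -> has_deriv_I f x l ->
  derivable_pt_lim (fun t => f (clamp t)) x l.
Proof.
  intros Hx H eps Heps.
  destruct (deriv_ED f x l H eps Heps) as [d [Hd H1]].
  assert (Hm : 0 < Rmin d (Rmin x (1 - x))).
  { repeat apply Rmin_glb_lt; lra. }
  exists (mkposreal _ Hm). intros h Hh Hha. simpl in Hha.
  assert (Ha1 : Rabs h < d) by (eapply Rlt_le_trans; [exact Hha|apply Rmin_l]).
  assert (Ha2 : Rabs h < Rmin x (1 - x)) by (eapply Rlt_le_trans; [exact Hha|apply Rmin_r]).
  assert (Hx1 : Rabs h < x) by (eapply Rlt_le_trans; [exact Ha2|apply Rmin_l]).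
  assert (Hx2 : Rabs h < 1 - x) by (eapply Rlt_le_trans; [exact Ha2|apply Rmin_r]).
  assert (HI : inI (x + h)).
  { unfold inI; unfold Rabs in *; destruct (Rcase_abs h); lra. }
  rewrite (clamp_id _ HI), (clamp_id x) by (unfold inI; lra).
  specialize (H1 (x + h) HI).
  replace (x + h - x) with h in H1 by ring.
  apply H1; auto. lra.
Qed.

Lemma MVT_I f f1 : (forall x, inI x -> has_deriv_I f x (f1 x)) ->
  forall y z, inI y -> inI z -> y < z ->
  exists c, y <= c <= z /\ f z - f y = f1 c * (z - y).
Proof.
  intros Hd y z Hy Hz Hyz.
  destruct (MVT_gen (fun t => f (clamp t)) y z f1) as [c [Hc E]].
  - intros x Hx. rewrite Rmin_left in Hx by lra. rewrite Rmax_right in Hx by lra.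
    apply is_derive_Reals. apply clamp_deriv.
    + unfold inI in *; lra.
    + apply Hd. unfold inI in *; lra.
  - intros x _. apply clamp_cont. intros t Ht. eapply deriv_cont. apply Hd; auto.
  - rewrite Rmin_left in Hc by lra. rewrite Rmax_right in Hc by lra.
    exists c; split; [exact Hc|].
    rewrite (clamp_id y) in E by exact Hy. rewrite (clamp_id z) in E by exact Hz. exact E.
Qed.

Lemma bound_I f : (forall x, inI x -> contI f x) ->
  exists M, forall x, inI x -> Rabs (f x) <= M.
Proof.
  intros Hc.
  destruct (continuity_ab_maj (fun t => f (clamp t)) 0 1 Rle_0_1) as [a [Ha _]].
  { intros c _; apply clamp_cont; auto. }
  destruct (continuity_ab_min (fun t => f (clamp t)) 0 1 Rle_0_1) as [b [Hb _]].
  { intros c _; apply clamp_cont; auto. }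
  exists (Rmax (Rabs (f (clamp a))) (Rabs (f (clamp b)))).
  intros x Hx. specialize (Ha x Hx). specialize (Hb x Hx).
  rewrite (clamp_id x Hx) in Ha, Hb.
  unfold Rmax, Rabs; repeat destruct (Rcase_abs _); repeat destruct (Rle_dec _ _); lra.
Qed.

Lemma min_I f : (forall x, inI x -> contI f x) ->
  exists x0, inI x0 /\ forall x, inI x -> f x0 <= f x.
Proof.
  intros Hc.
  destruct (continuity_ab_min (fun t => f (clamp t)) 0 1 Rle_0_1) as [b [Hb Hb1]].
  { intros c _; apply clamp_cont; auto. }
  exists b; split; [exact Hb1|].
  intros x Hx. specialize (Hb x Hx). rewrite (clamp_id x Hx), (clamp_id b Hb1) in Hb. exact Hb.
Qed.

Definition Rq (f : R -> R) (y z : R) : R := (f z - f y) / (z - y).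

Lemma Rq_sym f y z : Rq f y z = Rq f z y.
Proof.
  unfold Rq. destruct (Req_dec y z) as [->|H].
  - reflexivity.
  - field; lra.
Qed.

Definition SD (f : R -> R) (c lam : R) : Prop :=
  forall eps, 0 < eps -> exists del, 0 < del /\
    forall y z, inI y -> inI z -> y <> z -> Rabs (y - c) < del -> Rabs (z - c) < del ->
      Rabs (Rq f y z - lam) < eps.

Lemma near_pt c d : inI c -> 0 < d -> exists y, inI y /\ y <> c /\ Rabs (y - c) < d.
Proof.
  intros Hc Hd. unfold inI in *.
  set (t := Rmin d (1/2) / 2).
  assert (Ht : 0 < t /\ t < d /\ t <= 1/4).
  { unfold t, Rmin; destruct (Rle_dec d (1/2)); lra. }
  destruct (Rle_dec c (1/2)).
  - exists (c + t). split; [lra|]. split; [lra|].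
    replace (c + t - c) with t by ring. rewrite Rabs_right; lra.
  - exists (c - t). split; [lra|]. split; [lra|].
    replace (c - t - c) with (- t) by ring. rewrite Rabs_Ropp, Rabs_right; lra.
Qed.

Lemma SD_unique f c l m : inI c -> SD f c l -> SD f c m -> l = m.
Proof.
  intros Hc H1 H2.
  apply Rminus_diag_uniq. apply Rabs_eq_0.
  destruct (Rle_lt_or_eq_dec 0 (Rabs (l - m)) (Rabs_pos _)) as [Hp|Hp]; [|auto].
  exfalso.
  destruct (H1 (Rabs (l - m) / 2)) as [d1 [Hd1 K1]]; [lra|].
  destruct (H2 (Rabs (l - m) / 2)) as [d2 [Hd2 K2]]; [lra|].
  destruct (near_pt c (Rmin d1 d2) Hc) as [y [Hy [Hyc Hyd]]].
  { apply Rmin_glb_lt; auto. }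
  assert (A1 : Rabs (y - c) < d1) by (eapply Rlt_le_trans; [exact Hyd|apply Rmin_l]).
  assert (A2 : Rabs (y - c) < d2) by (eapply Rlt_le_trans; [exact Hyd|apply Rmin_r]).
  assert (A0 : Rabs (c - c) < Rmin d1 d2).
  { rewrite Rminus_diag, Rabs_R0. apply Rmin_glb_lt; auto. }
  assert (B1 : Rabs (c - c) < d1) by (eapply Rlt_le_trans; [exact A0|apply Rmin_l]).
  assert (B2 : Rabs (c - c) < d2) by (eapply Rlt_le_trans; [exact A0|apply Rmin_r]).
  specialize (K1 c y Hc Hy (not_eq_sym Hyc) B1 A1).
  specialize (K2 c y Hc Hy (not_eq_sym Hyc) B2 A2).
  pose proof (Rabs_triang (Rq f c y - m) (l - Rq f c y)).
  replace (Rq f c y - m + (l - Rq f c y)) with (l - m) in H by ring.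
  rewrite <- Rabs_Ropp with (x := l - Rq f c y) in H.
  replace (- (l - Rq f c y)) with (Rq f c y - l) in H by ring.
  lra.
Qed.

Lemma SD_ext f g c l : (forall x, inI x -> f x = g x) -> SD f c l -> SD g c l.
Proof.
  intros E H eps Heps. destruct (H eps Heps) as [d [Hd K]].
  exists d; split; auto. intros y z Hy Hz Hyz A B.
  unfold Rq. rewrite <- (E y Hy), <- (E z Hz). apply K; auto.
Qed.

Lemma SD_id c : SD (fun x => x) c 1.
Proof.
  intros eps Heps. exists 1; split; [lra|]. intros y z _ _ Hyz _ _.
  unfold Rq. replace ((z - y) / (z - y) - 1) with 0 by (field; lra).
  rewrite Rabs_R0; auto.
Qed.

Lemma C1_SD f f1 : (forall x, inI x -> has_deriv_I f x (f1 x)) ->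
  (forall x, inI x -> contI f1 x) -> forall c, inI c -> SD f c (f1 c).
Proof.
  intros Hd Hc c HcI eps Heps.
  destruct (Hc c HcI eps Heps) as [d [Hd0 K]].
  exists d; split; auto.
  assert (W : forall y z, inI y -> inI z -> y < z -> Rabs (y - c) < d -> Rabs (z - c) < d ->
      Rabs (Rq f y z - f1 c) < eps).
  { intros y z Hy Hz Hyz Ay Az.
    destruct (MVT_I f f1 Hd y z Hy Hz Hyz) as [x [Hx E]].
    unfold Rq. rewrite E. replace (f1 x * (z - y) / (z - y)) with (f1 x) by (field; lra).
    apply K. { unfold inI in *; lra. }
    unfold Rabs in *; repeat destruct (Rcase_abs _); lra. }
  intros y z Hy Hz Hyz Ay Az.
  destruct (Rlt_or_le y z) as [L|L].
  - apply W; auto.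
  - rewrite Rq_sym. apply W; auto. lra.
Qed.

Lemma SD_lip f c l : inI c -> SD f c l -> exists d, 0 < d /\
  forall y, inI y -> Rabs (y - c) < d -> Rabs (f y - f c) <= (Rabs l + 1) * Rabs (y - c).
Proof.
  intros Hc H. destruct (H 1 Rlt_0_1) as [d [Hd K]].
  exists d; split; auto. intros y Hy Hyd.
  destruct (Req_dec y c) as [->|Hne].
  { rewrite !Rminus_diag, Rabs_R0. lra. }
  assert (Hcc : Rabs (c - c) < d) by (rewrite Rminus_diag, Rabs_R0; auto).
  specialize (K c y Hc Hy (not_eq_sym Hne) Hcc Hyd).
  unfold Rq in K.
  assert (Hq : Rabs ((f y - f c) / (y - c)) <= Rabs l + 1).
  { pose proof (Rabs_triang_inv ((f y - f c) / (y - c)) l). lra. }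
  replace (f y - f c) with ((f y - f c) / (y - c) * (y - c)) by (field; lra).
  rewrite Rabs_mult. apply Rmult_le_compat_r; auto. apply Rabs_pos.
Qed.

Lemma SD_comp f g c l m : inI c -> SD f c l -> SD g (f c) m ->
  (forall y, inI y -> inI (f y)) ->
  (forall y z, inI y -> inI z -> y <> z -> f y <> f z) ->
  SD (fun x => g (f x)) c (m * l).
Proof.
  intros Hc Hf Hg HI Hinj eps Heps.
  set (K := Rabs l + 1).
  assert (HK : 0 < K) by (unfold K; pose proof (Rabs_pos l); lra).
  set (e2 := Rmin 1 (eps / (2 * (Rabs m + 1)))).
  assert (He2 : 0 < e2).
  { unfold e2. apply Rmin_glb_lt; [lra|]. apply Rdiv_lt_0_compat; [lra|].
    pose proof (Rabs_pos m); lra. }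
  set (e1 := eps / (2 * (K + 1))).
  assert (He1 : 0 < e1) by (unfold e1; apply Rdiv_lt_0_compat; lra).
  destruct (Hf e2 He2) as [df [Hdf Kf]].
  destruct (Hg e1 He1) as [dg [Hdg Kg]].
  destruct (SD_lip f c l Hc Hf) as [dl [Hdl Kl]].
  exists (Rmin (Rmin df dl) (dg / K)). split.
  { repeat apply Rmin_glb_lt; auto. apply Rdiv_lt_0_compat; auto. }
  intros y z Hy Hz Hyz Ay Az.
  assert (Ay1 : Rabs (y - c) < df) by
    (eapply Rlt_le_trans; [exact Ay|]; eapply Rle_trans; [apply Rmin_l|apply Rmin_l]).
  assert (Az1 : Rabs (z - c) < df) by
    (eapply Rlt_le_trans; [exact Az|]; eapply Rle_trans; [apply Rmin_l|apply Rmin_l]).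
  assert (Ay2 : Rabs (y - c) < dl) by
    (eapply Rlt_le_trans; [exact Ay|]; eapply Rle_trans; [apply Rmin_l|apply Rmin_r]).
  assert (Az2 : Rabs (z - c) < dl) by
    (eapply Rlt_le_trans; [exact Az|]; eapply Rle_trans; [apply Rmin_l|apply Rmin_r]).
  assert (Ay3 : Rabs (y - c) < dg / K) by (eapply Rlt_le_trans; [exact Ay|apply Rmin_r]).
  assert (Az3 : Rabs (z - c) < dg / K) by (eapply Rlt_le_trans; [exact Az|apply Rmin_r]).
  assert (Fy : Rabs (f y - f c) < dg).
  { eapply Rle_lt_trans; [apply Kl; auto|].
    fold K. apply Rlt_le_trans with (K * (dg / K)).
    { apply Rmult_lt_compat_l; auto. }
    right; field; lra. }
  assert (Fz : Rabs (f z - f c) < dg).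
  { eapply Rle_lt_trans; [apply Kl; auto|].
    fold K. apply Rlt_le_trans with (K * (dg / K)).
    { apply Rmult_lt_compat_l; auto. }
    right; field; lra. }
  specialize (Kf y z Hy Hz Hyz Ay1 Az1).
  specialize (Kg (f y) (f z) (HI y Hy) (HI z Hz) (Hinj y z Hy Hz Hyz) Fy Fz).
  assert (E : Rq (fun x => g (f x)) y z = Rq g (f y) (f z) * Rq f y z).
  { unfold Rq. field. split; [lra|]. intro E. apply (Hinj y z Hy Hz Hyz). lra. }
  rewrite E.
  set (a := Rq g (f y) (f z)) in *. set (b := Rq f y z) in *.
  replace (a * b - m * l) with ((a - m) * b + m * (b - l)) by ring.
  eapply Rle_lt_trans; [apply Rabs_triang|]. rewrite !Rabs_mult.
  assert (Hb : Rabs b <= K).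
  { unfold K. pose proof (Rabs_triang_inv b l).
    assert (e2 <= 1) by (unfold e2; apply Rmin_l). lra. }
  assert (T1 : Rabs (a - m) * Rabs b <= e1 * K).
  { apply Rmult_le_compat; try apply Rabs_pos; lra. }
  assert (T2 : Rabs m * Rabs (b - l) <= Rabs m * e2).
  { apply Rmult_le_compat_l; [apply Rabs_pos|lra]. }
  assert (T3 : Rabs m * e2 <= eps / 2).
  { apply Rle_trans with (Rabs m * (eps / (2 * (Rabs m + 1)))).
    { apply Rmult_le_compat_l; [apply Rabs_pos|apply Rmin_r]. }
    pose proof (Rabs_pos m).
    apply Rle_trans with ((Rabs m + 1) * (eps / (2 * (Rabs m + 1)))).
    { apply Rmult_le_compat_r; [|lra]. apply Rlt_le, Rdiv_lt_0_compat; lra. }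
    right; field; lra. }
  assert (T4 : e1 * K < eps / 2).
  { unfold e1. apply Rlt_le_trans with (eps / (2 * (K + 1)) * (K + 1)).
    { apply Rmult_lt_compat_l; [auto|lra]. }
    right; field; lra. }
  lra.
Qed.

Lemma C2_unpack phi : C2_on_I phi -> exists phi1,
  (forall x, inI x -> has_deriv_I phi x (phi1 x)) /\
  (forall x, inI x -> contI phi1 x) /\
  exists M, 0 <= M /\ forall x y, inI x -> inI y -> Rabs (phi1 x - phi1 y) <= M * Rabs (x - y).
Proof.
  intros [f1 [f2 [H1 [H2 H3]]]].
  exists f1. split; [auto|]. split.
  { intros x Hx. eapply deriv_cont. apply H2; auto. }
  assert (C2 : forall x, inI x -> contI f2 x).
  { intros x Hx eps Heps. destruct (lim_ED _ _ _ _ (H3 x Hx) eps Heps) as [d [Hd K]].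
    exists d; split; auto. }
  destruct (bound_I f2 C2) as [M HM].
  exists M. split.
  { eapply Rle_trans; [apply Rabs_pos|apply (HM 0)]. unfold inI; lra. }
  assert (W : forall x y, inI x -> inI y -> x < y -> Rabs (f1 x - f1 y) <= M * Rabs (x - y)).
  { intros x y Hx Hy Hxy.
    destruct (MVT_I f1 f2 H2 x y Hx Hy Hxy) as [c [Hc E]].
    rewrite <- Rabs_Ropp. replace (- (f1 x - f1 y)) with (f1 y - f1 x) by ring.
    rewrite E, Rabs_mult. rewrite <- (Rabs_Ropp (x - y)).
    replace (- (x - y)) with (y - x) by ring.
    apply Rmult_le_compat_r; [apply Rabs_pos|]. apply HM. unfold inI in *; lra. }
  intros x y Hx Hy.
  destruct (Rtotal_order x y) as [L|[L|L]].
  - apply W; auto.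
  - subst. rewrite !Rminus_diag, Rabs_R0. pose proof (HM 0). lra.
  - rewrite <- Rabs_Ropp, (Rabs_minus_sym x y). replace (- (f1 x - f1 y)) with (f1 y - f1 x) by ring.
    apply W; auto.
Qed.

Definition incr_I (f : R -> R) : Prop :=
  forall x y, inI x -> inI y -> x < y -> f x < f y.

Definition presI (f : R -> R) : Prop := forall x, inI x -> inI (f x).

Lemma incr_inj f : incr_I f -> forall y z, inI y -> inI z -> y <> z -> f y <> f z.
Proof.
  intros H y z Hy Hz Hyz E. destruct (Rtotal_order y z) as [L|[L|L]].
  - specialize (H y z Hy Hz L); lra.
  - auto.
  - specialize (H z y Hz Hy L); lra.
Qed.

Lemma incr_Rq f : incr_I f -> forall y z, inI y -> inI z -> y <> z -> 0 < Rq f y z.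
Proof.
  intros H y z Hy Hz Hyz. unfold Rq.
  destruct (Rtotal_order y z) as [L|[L|L]].
  - specialize (H y z Hy Hz L). apply Rdiv_lt_0_compat; lra.
  - contradiction.
  - specialize (H z y Hz Hy L).
    replace ((f z - f y) / (z - y)) with ((f y - f z) / (y - z)) by (field; lra).
    apply Rdiv_lt_0_compat; lra.
Qed.

Lemma Rq_MVT f f1 : (forall x, inI x -> has_deriv_I f x (f1 x)) ->
  forall y z, inI y -> inI z -> y <> z ->
  exists xi, ((y <= xi <= z) \/ (z <= xi <= y)) /\ Rq f y z = f1 xi.
Proof.
  intros Hd y z Hy Hz Hyz.
  destruct (Rtotal_order y z) as [L|[L|L]].
  - destruct (MVT_I f f1 Hd y z Hy Hz L) as [c [Hc E]].
    exists c; split; [left; auto|]. unfold Rq. rewrite E. field. lra.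
  - contradiction.
  - destruct (MVT_I f f1 Hd z y Hz Hy L) as [c [Hc E]].
    exists c; split; [right; auto|]. rewrite Rq_sym. unfold Rq. rewrite E. field. lra.
Qed.

Definition good (phi psi : R -> R) : Prop :=
  inverse_on_I phi psi /\ C2_on_I phi /\ C2_on_I psi /\ incr_I phi.

Lemma deriv_pos phi psi : good phi psi -> exists phi1,
  (forall x, inI x -> has_deriv_I phi x (phi1 x)) /\
  (forall x, inI x -> contI phi1 x) /\
  (exists M, 0 <= M /\ forall x y, inI x -> inI y -> Rabs (phi1 x - phi1 y) <= M * Rabs (x - y)) /\
  (forall x, inI x -> 0 < phi1 x).
Proof.
  intros [[Hp1 [Hp2 [Hp3 Hp4]]] [C1 [C2 Hinc]]].
  destruct (C2_unpack phi C1) as [f1 [D1 [K1 L1]]].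
  destruct (C2_unpack psi C2) as [g1 [D2 [K2 L2]]].
  exists f1. split; [auto|]. split; [auto|]. split; [auto|].
  intros x Hx.
  assert (S1 : SD phi x (f1 x)) by (apply C1_SD; auto).
  assert (S2 : SD psi (phi x) (g1 (phi x))) by (apply C1_SD; auto).
  assert (S3 := SD_comp phi psi x _ _ Hx S1 S2 Hp1 (incr_inj phi Hinc)).
  assert (S4 : SD (fun t => t) x (g1 (phi x) * f1 x)).
  { eapply SD_ext; [|exact S3]. intros; simpl; auto. }
  assert (E := SD_unique _ _ _ _ Hx S4 (SD_id x)).
  assert (Hne : f1 x <> 0) by (intro Z; rewrite Z in E; lra).
  destruct (Rlt_or_le 0 (f1 x)) as [P|P]; [auto|]. exfalso.
  assert (N : f1 x < 0) by lra.
  destruct (S1 (- f1 x)) as [d [Hd K]]; [lra|].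
  destruct (near_pt x d Hx Hd) as [y [Hy [Hyx Hyd]]].
  assert (Hxx : Rabs (x - x) < d) by (rewrite Rminus_diag, Rabs_R0; auto).
  specialize (K x y Hx Hy (not_eq_sym Hyx) Hxx Hyd).
  pose proof (incr_Rq phi Hinc x y Hx Hy (not_eq_sym Hyx)).
  unfold Rabs in K; destruct (Rcase_abs _) in K; lra.
Qed.

Definition DIST (f : R -> R) (L : R) : Prop :=
  forall c d y z y' z', inI c -> inI d ->
    c <= y <= d -> c <= z <= d -> c <= y' <= d -> c <= z' <= d ->
    y <> z -> y' <> z' -> Rq f y z <= Rq f y' z' * exp (L * (d - c)).

Lemma good_DIST phi psi : good phi psi -> exists L, 0 <= L /\ DIST phi L.
Proof.
  intros G. destruct (deriv_pos phi psi G) as [f1 [D1 [K1 [[M [HM LM]] P1]]]].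
  destruct (min_I f1 K1) as [x0 [Hx0 Hmin]].
  set (m := f1 x0). assert (Hm : 0 < m) by (apply P1; auto).
  exists (M / m). split. { apply Rmult_le_pos; auto. apply Rlt_le, Rinv_0_lt_compat; auto. }
  intros c d y z y' z' Hc Hd Hy Hz Hy' Hz' Hyz Hyz'.
  assert (IY : inI y) by (unfold inI in *; lra).
  assert (IZ : inI z) by (unfold inI in *; lra).
  assert (IY' : inI y') by (unfold inI in *; lra).
  assert (IZ' : inI z') by (unfold inI in *; lra).
  destruct (Rq_MVT phi f1 D1 y z IY IZ Hyz) as [xi [Hxi E1]].
  destruct (Rq_MVT phi f1 D1 y' z' IY' IZ' Hyz') as [xi' [Hxi' E2]].
  assert (Bx : c <= xi <= d) by (destruct Hxi; lra).
  assert (Bx' : c <= xi' <= d) by (destruct Hxi'; lra).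
  assert (Ixi : inI xi) by (unfold inI in *; lra).
  assert (Ixi' : inI xi') by (unfold inI in *; lra).
  rewrite E1, E2.
  assert (Hl := LM xi xi' Ixi Ixi').
  assert (Hab : Rabs (xi - xi') <= d - c) by (unfold Rabs; destruct (Rcase_abs _); lra).
  assert (Hf : f1 xi <= f1 xi' + M * (d - c)).
  { assert (M * Rabs (xi - xi') <= M * (d - c)) by (apply Rmult_le_compat_l; auto).
    pose proof (Rle_abs (f1 xi - f1 xi')). lra. }
  assert (Hmi : m <= f1 xi') by (apply Hmin; auto).
  assert (Hex := exp_ineq1_le (M / m * (d - c))).
  assert (HMd : 0 <= M * (d - c)) by (apply Rmult_le_pos; lra).
  apply Rle_trans with (f1 xi' * (1 + M / m * (d - c))).
  { assert (M * (d - c) <= f1 xi' * (M / m * (d - c))).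
    { replace (f1 xi' * (M / m * (d - c))) with ((f1 xi' / m) * (M * (d - c))) by (field; lra).
      rewrite <- (Rmult_1_l (M * (d - c))) at 1.
      apply Rmult_le_compat_r; auto.
      apply (Rmult_le_reg_r m); [auto|]. replace (f1 xi' / m * m) with (f1 xi') by (field; lra). lra. }
    lra. }
  apply Rmult_le_compat_l; [|auto]. pose proof (P1 xi' Ixi'); lra.
Qed.

Lemma DIST_K f L : DIST f L -> presI f ->
  forall y z, inI y -> inI z -> y <> z -> Rq f y z <= exp L.
Proof.
  intros H HI y z Hy Hz Hyz.
  assert (I0 : inI 0) by (unfold inI; lra). assert (I1 : inI 1) by (unfold inI; lra).
  specialize (H 0 1 y z 0 1 I0 I1).
  assert (A : Rq f y z <= Rq f 0 1 * exp (L * (1 - 0))).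
  { apply H; unfold inI in *; lra. }
  replace (L * (1 - 0)) with L in A by ring.
  assert (B : Rq f 0 1 <= 1).
  { unfold Rq. pose proof (HI 0 I0). pose proof (HI 1 I1). unfold inI in *.
    replace ((f 1 - f 0) / (1 - 0)) with (f 1 - f 0) by field. lra. }
  pose proof (exp_pos L).
  apply Rle_trans with (Rq f 0 1 * exp L); auto.
  rewrite <- (Rmult_1_l (exp L)) at 2. apply Rmult_le_compat_r; lra.
Qed.

Lemma DIST_comp phi psi L1 L2 : DIST phi L1 -> DIST psi L2 -> 0 <= L2 ->
  incr_I phi -> presI phi -> incr_I psi ->
  DIST (fun x => psi (phi x)) (L1 + L2 * exp L1).
Proof.
  intros D1 D2 HL2 Ip Pp Is c d y z y' z' Hc Hd Hy Hz Hy' Hz' Hyz Hyz'.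
  assert (IY : inI y) by (unfold inI in *; lra).
  assert (IZ : inI z) by (unfold inI in *; lra).
  assert (IY' : inI y') by (unfold inI in *; lra).
  assert (IZ' : inI z') by (unfold inI in *; lra).
  assert (Hinj := incr_inj phi Ip).
  assert (Mono : forall t, c <= t <= d -> phi c <= phi t <= phi d).
  { intros t Ht. assert (It : inI t) by (unfold inI in *; lra).
    split.
    - destruct (Req_dec c t) as [->|N]; [lra|]. left; apply Ip; auto; lra.
    - destruct (Req_dec t d) as [->|N]; [lra|]. left; apply Ip; auto; lra. }
  assert (Hlen : phi d - phi c <= exp L1 * (d - c)).
  { destruct (Req_dec c d) as [->|N].
    - rewrite !Rminus_diag. lra.
    - assert (Q := DIST_K phi L1 D1 Pp c d Hc Hd N). unfold Rq in Q.
      assert (Hcd : c < d) by lra.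
      apply (Rmult_le_compat_r (d - c)) in Q; [|lra].
      replace ((phi d - phi c) / (d - c) * (d - c)) with (phi d - phi c) in Q by (field; lra).
      lra. }
  assert (E : forall u v, inI u -> inI v -> u <> v ->
     Rq (fun x => psi (phi x)) u v = Rq psi (phi u) (phi v) * Rq phi u v).
  { intros u v Hu Hv Huv. unfold Rq. field. split; [lra|].
    intro Z. apply (Hinj u v Hu Hv Huv). lra. }
  rewrite (E y z IY IZ Hyz), (E y' z' IY' IZ' Hyz').
  assert (A1 : Rq psi (phi y) (phi z) <= Rq psi (phi y') (phi z') * exp (L2 * (phi d - phi c))).
  { apply D2; auto; try apply Mono; auto. }
  assert (A2 : Rq phi y z <= Rq phi y' z' * exp (L1 * (d - c))).
  { apply D1; auto. }
  assert (A3 : exp (L2 * (phi d - phi c)) <= exp (L2 * exp L1 * (d - c))).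
  { destruct (Req_dec (L2 * (phi d - phi c)) (L2 * exp L1 * (d - c))) as [Q|Q].
    - rewrite Q; lra.
    - left. apply exp_increasing. rewrite Rmult_assoc.
      assert (L2 * (phi d - phi c) <= L2 * (exp L1 * (d - c))) by (apply Rmult_le_compat_l; auto).
      lra. }
  assert (P1 := incr_Rq psi Is (phi y) (phi z) (Pp y IY) (Pp z IZ) (Hinj y z IY IZ Hyz)).
  assert (P2 := incr_Rq phi Ip y z IY IZ Hyz).
  assert (P3 := incr_Rq psi Is (phi y') (phi z') (Pp y' IY') (Pp z' IZ') (Hinj y' z' IY' IZ' Hyz')).
  assert (P4 := incr_Rq phi Ip y' z' IY' IZ' Hyz').
  replace ((L1 + L2 * exp L1) * (d - c)) with (L2 * exp L1 * (d - c) + L1 * (d - c)) by ring.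
  rewrite exp_plus.
  set (a := Rq psi (phi y) (phi z)) in *. set (b := Rq phi y z) in *.
  set (a' := Rq psi (phi y') (phi z')) in *. set (b' := Rq phi y' z') in *.
  set (E1 := exp (L2 * (phi d - phi c))) in *. set (E2 := exp (L1 * (d - c))) in *.
  set (E3 := exp (L2 * exp L1 * (d - c))) in *.
  assert (0 < E1) by apply exp_pos. assert (0 < E2) by apply exp_pos.
  apply Rle_trans with ((a' * E1) * (b' * E2)).
  { apply Rmult_le_compat; lra. }
  apply Rle_trans with ((a' * E3) * (b' * E2)).
  { apply Rmult_le_compat_r; [apply Rmult_le_pos; lra|]. apply Rmult_le_compat_l; lra. }
  right; ring.
Qed.

Lemma fiter_I f : presI f -> forall k, presI (fiter k f).
Proof. intros H k; induction k; intros x Hx; simpl; auto. Qed.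

Lemma fiter_incr f : incr_I f -> presI f -> forall k, incr_I (fiter k f).
Proof.
  intros H P k; induction k; intros x y Hx Hy Hxy; simpl; auto.
  apply H; try apply fiter_I; auto.
Qed.

Lemma fiter_S' f k x : fiter (S k) f x = fiter k f (f x).
Proof. revert x; induction k; intros x; simpl; auto. simpl in IHk. rewrite <- IHk. auto. Qed.

Lemma fiter_DIST f L : DIST f L -> 0 <= L -> incr_I f -> presI f ->
  forall k, exists L', 0 <= L' /\ DIST (fiter k f) L'.
Proof.
  intros D HL Ic P k. induction k.
  - exists 0. split; [lra|]. intros c d y z y' z' _ _ _ _ _ _ Hyz Hyz'.
    simpl. unfold Rq. rewrite Rmult_0_l, exp_0.
    replace ((z - y) / (z - y)) with 1 by (field; lra).
    replace ((z' - y') / (z' - y')) with 1 by (field; lra). lra.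
  - destruct IHk as [L' [HL' D']].
    exists (L' + L * exp L'). split.
    { pose proof (exp_pos L'). assert (0 <= L * exp L') by (apply Rmult_le_pos; lra). lra. }
    apply (DIST_comp (fiter k f) f L' L D' D HL (fiter_incr f Ic P k) (fiter_I f P k) Ic).
Qed.

Lemma H_lip H L : DIST H L -> presI H -> incr_I H ->
  forall u v, inI u -> inI v -> Rabs (H u - H v) <= exp L * Rabs (u - v).
Proof.
  intros D P I u v Hu Hv.
  destruct (Req_dec u v) as [->|N].
  { rewrite !Rminus_diag, Rabs_R0. lra. }
  assert (K := DIST_K H L D P u v Hu Hv N).
  assert (Q := incr_Rq H I u v Hu Hv N).
  unfold Rq in *.
  replace (H u - H v) with ((H v - H u) / (v - u) * (u - v)) by (field; lra).
  rewrite Rabs_mult. rewrite (Rabs_right ((H v - H u) / (v - u))) by lra.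
  apply Rmult_le_compat_r; [apply Rabs_pos|auto].
Qed.

Section Kop.
Variables (H : R -> R) (L a b : R).
Hypotheses (Ia : inI a) (Ib : inI b) (Hab : a < b)
  (HI : incr_I H) (HP : presI H) (HD : DIST H L) (HL : 0 <= L)
  (Ha : H a = a) (Hdown : forall y, a < y < b -> a < H y < y).

Lemma K1 : forall k y, a < y < b -> a < fiter k H y <= y.
Proof.
  induction k; intros y Hy; simpl; [lra|].
  specialize (IHk y Hy). assert (a < fiter k H y < b) by lra.
  specialize (Hdown _ H0). lra.
Qed.

Lemma iter_to_a : forall y, a < y < b -> forall eps, 0 < eps -> exists k, fiter k H y < a + eps.
Proof.
  intros y Hy eps Heps.
  set (U := fun n => fiter n H y).
  assert (Dec : Un_decreasing U).
  { intros n. unfold U; simpl. pose proof (K1 n y Hy). 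
    assert (a < fiter n H y < b) by lra. specialize (Hdown _ H1). lra. }
  assert (Lb : has_lb U).
  { exists (- a). intros x [i ->]. unfold opp_seq, U. pose proof (K1 i y Hy). lra. }
  destruct (decreasing_cv U Dec Lb) as [l Hl].
  assert (Hla : a <= l).
  { destruct (Rle_or_lt a l) as [?|N]; auto. exfalso.
    destruct (Hl (a - l)) as [n Hn]; [lra|]. specialize (Hn n (le_n n)).
    unfold Rdist, U in Hn. pose proof (K1 n y Hy).
    unfold Rabs in Hn; destruct (Rcase_abs _) in Hn; lra. }
  assert (Hly : l <= y).
  { destruct (Rle_or_lt l y) as [?|N]; auto. exfalso.
    destruct (Hl (l - y)) as [n Hn]; [lra|]. specialize (Hn n (le_n n)).
    unfold Rdist, U in Hn. pose proof (K1 n y Hy).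
    unfold Rabs in Hn; destruct (Rcase_abs _) in Hn; lra. }
  assert (IlI : inI l) by (unfold inI in *; lra).
  assert (C1 : Un_cv (fun n => U (S n)) l).
  { intros e He. destruct (Hl e He) as [N HN]. exists N. intros n Hn. apply HN. lia. }
  assert (C2 : Un_cv (fun n => U (S n)) (H l)).
  { intros e He. destruct (Hl (e / exp L)) as [N HN].
    { apply Rdiv_lt_0_compat; auto. apply exp_pos. }
    exists N. intros n Hn. specialize (HN n Hn). unfold Rdist, U in *. simpl.
    assert (IU : inI (fiter n H y)).
    { pose proof (K1 n y Hy). unfold inI in *; lra. }
    eapply Rle_lt_trans; [apply (H_lip H L HD HP HI); auto|].
    pose proof (exp_pos L).
    apply Rlt_le_trans with (exp L * (e / exp L)).
    { apply Rmult_lt_compat_l; auto. }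
    right; field; lra. }
  assert (Fx : H l = l) by (apply (UL_sequence _ _ _ C2 C1)).
  assert (Hleq : l = a).
  { destruct (Req_dec l a) as [?|N]; auto. exfalso.
    assert (a < l < b) by lra. specialize (Hdown _ H0). lra. }
  destruct (Hl eps Heps) as [n Hn]. exists n. specialize (Hn n (le_n n)).
  unfold Rdist, U in Hn. rewrite Hleq in Hn.
  unfold Rabs in Hn; destruct (Rcase_abs _) in Hn; lra.
Qed.


Lemma incr_le f x y : incr_I f -> inI x -> inI y -> x <= y -> f x <= f y.
Proof. intros I Hx Hy [L0|E]; [left; apply I; auto| subst; lra]. Qed.

Lemma KD d : a < d < b -> forall k y z y' z',
  H d <= y <= d -> H d <= z <= d -> H d <= y' <= d -> H d <= z' <= d ->
  y <> z -> y' <> z' ->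
  Rq (fiter k H) y z <= Rq (fiter k H) y' z' * exp (L * (d - fiter k H d)).
Proof.
  intros Hd. induction k; intros y z y' z' Hy Hz Hy' Hz' Hyz Hyz'.
  - simpl. unfold Rq. rewrite Rminus_diag, Rmult_0_r, exp_0.
    replace ((z - y) / (z - y)) with 1 by (field; lra).
    replace ((z' - y') / (z' - y')) with 1 by (field; lra). lra.
  - assert (IdI : inI d) by (unfold inI in *; lra).
    assert (HdI : inI (H d)) by (apply HP; auto).
    assert (Hdd := Hdown d Hd).
    assert (IN : forall t, H d <= t <= d -> inI t) by (intros t Ht; unfold inI in *; lra).
    assert (Ik := fiter_incr H HI HP k). assert (Pk := fiter_I H HP k).
    assert (Mono : forall t, H d <= t <= d -> fiter (S k) H d <= fiter k H t <= fiter k H d).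
    { intros t Ht. rewrite fiter_S'. split; apply incr_le; auto; try apply IN; lra. }
    assert (Hinj := incr_inj _ Ik).
    assert (E : forall u v, H d <= u <= d -> H d <= v <= d -> u <> v ->
       Rq (fiter (S k) H) u v = Rq H (fiter k H u) (fiter k H v) * Rq (fiter k H) u v).
    { intros u v Hu Hv Huv. unfold Rq. simpl. field. split; [lra|].
      intro Z. apply (Hinj u v (IN u Hu) (IN v Hv) Huv). lra. }
    rewrite (E y z Hy Hz Hyz), (E y' z' Hy' Hz' Hyz').
    assert (I1 : inI (fiter (S k) H d)) by (apply fiter_I; auto).
    assert (I2 : inI (fiter k H d)) by (apply fiter_I; auto).
    assert (A1 := HD (fiter (S k) H d) (fiter k H d) (fiter k H y) (fiter k H z)
                  (fiter k H y') (fiter k H z') I1 I2 (Mono y Hy) (Mono z Hz) (Mono y' Hy') (Mono z' Hz')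
                  (Hinj y z (IN y Hy) (IN z Hz) Hyz) (Hinj y' z' (IN y' Hy') (IN z' Hz') Hyz')).
    assert (A2 := IHk y z y' z' Hy Hz Hy' Hz' Hyz Hyz').
    assert (P1 := incr_Rq H HI _ _ (Pk y (IN y Hy)) (Pk z (IN z Hz)) (Hinj y z (IN y Hy) (IN z Hz) Hyz)).
    assert (P2 := incr_Rq _ Ik y z (IN y Hy) (IN z Hz) Hyz).
    assert (P3 := incr_Rq H HI _ _ (Pk y' (IN y' Hy')) (Pk z' (IN z' Hz')) (Hinj y' z' (IN y' Hy') (IN z' Hz') Hyz')).
    assert (P4 := incr_Rq _ Ik y' z' (IN y' Hy') (IN z' Hz') Hyz').
    replace (L * (d - fiter (S k) H d)) with
      (L * (fiter k H d - fiter (S k) H d) + L * (d - fiter k H d)) by ring.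
    rewrite exp_plus.
    set (a1 := Rq H (fiter k H y) (fiter k H z)) in *.
    set (a1' := Rq H (fiter k H y') (fiter k H z')) in *.
    set (b1 := Rq (fiter k H) y z) in *. set (b1' := Rq (fiter k H) y' z') in *.
    set (E1 := exp (L * (fiter k H d - fiter (S k) H d))) in *.
    set (E2 := exp (L * (d - fiter k H d))) in *.
    apply Rle_trans with ((a1' * E1) * (b1' * E2)).
    { apply Rmult_le_compat; lra. }
    right; ring.
Qed.

Fixpoint ssum (f : nat -> R) (n : nat) : R :=
  match n with O => 0 | S k => ssum f k + f k end.

Lemma bernoulli e n : 0 <= e <= 1 -> 1 - INR n * e <= (1 - e) ^ n.
Proof.
  intros He. induction n.
  - simpl. lra.
  - rewrite S_INR. simpl.
    assert (0 <= INR n) by apply pos_INR.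
    assert (0 <= INR n * e * e) by (apply Rmult_le_pos; [apply Rmult_le_pos|]; lra).
    assert ((1 - e) * (1 - INR n * e) <= (1 - e) * (1 - e) ^ n) by (apply Rmult_le_compat_l; lra).
    nra.
Qed.

Variables (W : R -> R) (lam p : R).
Hypotheses (Wab : forall y, a < y < b -> a < W y < b)
  (Wincr : forall y z, a < y -> y < z -> z < b -> W y < W z)
  (Wcomm : forall y, a < y < b -> W (H y) = H (W y))
  (WSD : SD W a lam) (Hp : a < p < b) (Wp : W p = p).

Lemma K2 : forall k y, a < y < b -> W (fiter k H y) = fiter k H (W y).
Proof.
  induction k; intros y Hy; simpl; auto.
  pose proof (K1 k y Hy). rewrite Wcomm by lra. rewrite IHk; auto.
Qed.

Lemma Kfix : forall k, W (fiter k H p) = fiter k H p.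
Proof. intros k. rewrite K2; auto. rewrite Wp. auto. Qed.

Lemma Kbound : forall k y, a < y < b -> a < fiter k H y < b.
Proof. intros k y Hy. pose proof (K1 k y Hy). lra. Qed.

Lemma lam1 : lam = 1.
Proof.
  apply Rminus_diag_uniq. apply Rabs_eq_0.
  destruct (Rle_lt_or_eq_dec 0 (Rabs (lam - 1)) (Rabs_pos _)) as [Hpos|Hpos]; [|auto].
  exfalso.
  destruct (WSD (Rabs (lam - 1))) as [d [Hd K]]; [auto|].
  destruct (iter_to_a p Hp d Hd) as [k Hk].
  set (y := fiter (S k) H p) in *. set (z := fiter k H p) in *.
  assert (Bz := Kbound k p Hp).
  assert (Hyz : y < z) by (unfold y, z; simpl; apply Hdown; auto).
  assert (By := Kbound (S k) p Hp). fold y in By. fold z in Bz.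
  assert (Iy : inI y) by (unfold inI in *; lra).
  assert (Iz : inI z) by (unfold inI in *; lra).
  assert (Ay : Rabs (y - a) < d) by (rewrite Rabs_right; lra).
  assert (Az : Rabs (z - a) < d) by (rewrite Rabs_right; lra).
  specialize (K y z Iy Iz ltac:(lra) Ay Az).
  unfold Rq in K. unfold y, z in K. rewrite !Kfix in K. fold y z in K.
  replace ((z - y) / (z - y)) with 1 in K by (field; lra).
  rewrite <- Rabs_Ropp in K. replace (- (1 - lam)) with (lam - 1) in K by ring. lra.
Qed.

Lemma find_i : forall q, a < q < p -> exists i, fiter (S i) H p < q <= fiter i H p.
Proof.
  intros q Hq.
  assert (G : forall n, fiter n H p < q -> exists i, fiter (S i) H p < q <= fiter i H p).
  { induction n; intros Hn; simpl in Hn; [lra|].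
    destruct (Rlt_or_le (fiter n H p) q) as [L1|L1].
    - apply IHn; auto.
    - exists n. simpl. lra. }
  destruct (iter_to_a p Hp (q - a)) as [n Hn]; [lra|].
  apply (G n). lra.
Qed.


Lemma kopell_main : forall y, a < y < b -> W y = y.
Proof.
  intros q Hq. destruct (Req_dec (W q) q) as [E|NE]; auto. exfalso.
  assert (IfI : forall y, a < y < b -> inI y) by (intros y Hy; unfold inI in *; lra).
  destruct (iter_to_a q Hq (p - a)) as [k0 Hk0]; [lra|].
  set (q' := fiter k0 H q) in *.
  assert (Bq' : a < q' < b) by (apply Kbound; auto).
  assert (NE' : W q' <> q').
  { unfold q'. rewrite K2 by auto. intro Z.
    apply (incr_inj _ (fiter_incr H HI HP k0) (W q) q (IfI _ (Wab q Hq)) (IfI _ Hq) NE Z). }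
  destruct (find_i q' ltac:(lra)) as [i0 [Hi1 Hi2]].
  set (d := fiter i0 H p) in *.
  assert (Bd : a < d < b) by (apply Kbound; auto).
  assert (Wd : W d = d) by (apply Kfix).
  assert (Wc : W (H d) = H d) by (apply (Kfix (S i0))).
  change (fiter (S i0) H p) with (H d) in Hi1.
  assert (Hcd := Hdown d Bd).
  assert (Hqd : q' < d) by (destruct Hi2 as [Q|Q]; auto; exfalso; apply NE'; rewrite Q; exact Wd).
  set (c := H d) in *.
  set (s := fun j => fiter j W q').
  assert (Sb : forall j, c < s j < d).
  { induction j; unfold s in *; simpl; [lra|].
    split; [rewrite <- Wc at 1|rewrite <- Wd at 1]; apply Wincr; lra. }
  assert (Winj : forall y z, a < y < b -> a < z < b -> y <> z -> W y <> W z).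
  { intros y z Hy Hz Hyz Z. destruct (Rtotal_order y z) as [L1|[L1|L1]].
    - specialize (Wincr y z ltac:(lra) L1 ltac:(lra)). lra.
    - auto.
    - specialize (Wincr z y ltac:(lra) L1 ltac:(lra)). lra. }
  assert (Sne : forall j, s (S j) <> s j).
  { induction j; unfold s in *; simpl; auto.
    apply Winj; auto; simpl in *; pose proof (Sb (S j)); pose proof (Sb j); unfold s in *; simpl in *; lra. }
  set (D0 := s 1%nat - s 0%nat).
  assert (HD0 : D0 <> 0) by (unfold D0; pose proof (Sne 0%nat); lra).
  set (kap := exp (- L) / 2).
  assert (Hkap : 0 < kap) by (unfold kap; pose proof (exp_pos (- L)); lra).
  assert (Claim : forall j, kap <= (s (S j) - s j) / D0).
  { intros j.
    set (eps := 1 / (2 * (INR j + 1))).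
    assert (Hj : 0 <= INR j) by apply pos_INR.
    assert (Heps : 0 < eps) by (unfold eps; apply Rdiv_lt_0_compat; lra).
    assert (Heps2 : eps <= 1 / 2).
    { unfold eps. apply Rmult_le_reg_r with (2 * (INR j + 1)); [lra|].
      replace (1 / (2 * (INR j + 1)) * (2 * (INR j + 1))) with 1 by (field; lra). nra. }
    assert (Hje : INR j * eps <= 1 / 2).
    { unfold eps. replace (INR j * (1 / (2 * (INR j + 1)))) with ((INR j / (INR j + 1)) * (1/2)) by (field; lra).
      assert (INR j / (INR j + 1) <= 1).
      { apply Rmult_le_reg_r with (INR j + 1); [lra|].
        replace (INR j / (INR j + 1) * (INR j + 1)) with (INR j) by (field; lra). lra. }
      lra. }
    destruct (WSD eps Heps) as [del [Hdel K]].
    rewrite lam1 in K.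
    destruct (iter_to_a d Bd del Hdel) as [k Hk].
    set (Hk_ := fiter k H) in *.
    assert (Ik := fiter_incr H HI HP k). assert (Pk := fiter_I H HP k).
    fold Hk_ in Ik, Pk.
    set (t := fun i => Hk_ (s i)).
    assert (Sab : forall i, a < s i < b) by (intro i; pose proof (Sb i); lra).
    assert (Tb : forall i, a < t i < a + del).
    { intros i. unfold t. split.
      - apply (K1 k (s i) (Sab i)).
      - apply Rle_lt_trans with (Hk_ d); auto.
        apply incr_le; auto; try apply IfI; auto. pose proof (Sb i); lra. }
    assert (TW : forall i, t (S i) = W (t i)).
    { intros i. unfold t, Hk_. rewrite K2 by auto. unfold s; simpl. auto. }
    assert (Tne : forall i, t (S i) <> t i).
    { intros i. unfold t. apply (incr_inj _ Ik); try apply IfI; auto. }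
    assert (R : forall i, 1 - eps < (t (S (S i)) - t (S i)) / (t (S i) - t i)).
    { intros i.
      assert (Ii : inI (t i)) by (apply Pk; apply IfI; auto).
      assert (Ii' : inI (t (S i))) by (apply Pk; apply IfI; auto).
      assert (A1 : Rabs (t i - a) < del) by (pose proof (Tb i); rewrite Rabs_right; lra).
      assert (A2 : Rabs (t (S i) - a) < del) by (pose proof (Tb (S i)); rewrite Rabs_right; lra).
      specialize (K (t i) (t (S i)) Ii Ii' (not_eq_sym (Tne i)) A1 A2).
      unfold Rq in K. rewrite <- !TW in K.
      pose proof (Rabs_def2 _ _ K). lra. }
    assert (Ratio : forall i, (1 - eps) ^ i <= (t (S i) - t i) / (t 1%nat - t 0%nat)).
    { induction i.
      - simpl. right. field. apply Rminus_eq_contra. apply Tne.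
      - replace ((t (S (S i)) - t (S i)) / (t 1%nat - t 0%nat)) with
          ((t (S (S i)) - t (S i)) / (t (S i) - t i) * ((t (S i) - t i) / (t 1%nat - t 0%nat))).
        2:{ field. split; apply Rminus_eq_contra; apply Tne. }
        simpl. apply Rmult_le_compat; try lra.
        + apply pow_le. lra.
        + left; apply R. }
    assert (Half : 1 / 2 <= (t (S j) - t j) / (t 1%nat - t 0%nat)).
    { eapply Rle_trans; [|apply Ratio]. eapply Rle_trans; [|apply bernoulli]; lra. }
    set (A := fun i => Rq Hk_ (s i) (s (S i))).
    assert (TA : forall i, t (S i) - t i = A i * (s (S i) - s i)).
    { intros i. unfold A, Rq, t. field. apply Rminus_eq_contra. apply Sne. }
    assert (Apos : forall i, 0 < A i).
    { intros i. unfold A. apply incr_Rq; auto; try apply IfI; auto. }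
    assert (Adist : A j <= A 0%nat * exp L).
    { unfold A.
      assert (KD1 := KD d Bd k (s j) (s (S j)) (s 0%nat) (s 1%nat)).
      fold c in KD1. fold Hk_ in KD1.
      eapply Rle_trans; [apply KD1|].
      - pose proof (Sb j); lra.
      - pose proof (Sb (S j)); lra.
      - pose proof (Sb 0%nat); lra.
      - pose proof (Sb 1%nat); lra.
      - apply not_eq_sym, Sne.
      - apply not_eq_sym, Sne.
      - apply Rmult_le_compat_l; [left; apply (Apos 0%nat)|].
        destruct (Req_dec (L * (d - Hk_ d)) L) as [Q|Q]; [rewrite Q; lra|].
        left; apply exp_increasing.
        assert (Q1 := K1 k d Bd). fold Hk_ in Q1.
        assert (Q2 := IfI d Bd). unfold inI in Q2, Ia.
        assert (d - Hk_ d <= 1) by lra.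
        assert (L * (d - Hk_ d) <= L * 1) by (apply Rmult_le_compat_l; lra).
        lra. }
    rewrite !TA in Half.
    set (sig := (s (S j) - s j) / D0).
    assert (Eh : A j * (s (S j) - s j) / (A 0%nat * (s 1%nat - s 0%nat)) = (A j / A 0%nat) * sig).
    { unfold sig, D0. pose proof (Apos 0%nat). pose proof (Sne 0%nat).
      field. split; [|lra]. intro Z; apply H1; lra. }
    rewrite Eh in Half.
    pose proof (Apos j). pose proof (Apos 0%nat). pose proof (exp_pos L).
    assert (Hqq : 0 < A j / A 0%nat) by (apply Rdiv_lt_0_compat; auto).
    assert (Hsig : 0 < sig).
    { destruct (Rlt_or_le 0 sig) as [?|N]; auto.
      assert (A j / A 0%nat * sig <= 0).
      { rewrite <- (Rmult_0_r (A j / A 0%nat)). apply Rmult_le_compat_l; lra. }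
      lra. }
    assert (Hq2 : A j / A 0%nat <= exp L).
    { apply Rmult_le_reg_r with (A 0%nat); auto.
      replace (A j / A 0%nat * A 0%nat) with (A j) by (field; lra). lra. }
    assert (1 / 2 <= exp L * sig).
    { eapply Rle_trans; [exact Half|]. apply Rmult_le_compat_r; lra. }
    unfold kap. rewrite exp_Ropp.
    apply Rmult_le_reg_l with (exp L); auto.
    replace (exp L * (/ exp L / 2)) with (1 / 2) by (field; lra). lra. }
  assert (Sum : forall N, ssum (fun j => (s (S j) - s j) / D0) N = (s N - s 0%nat) / D0).
  { induction N; simpl ssum.
    - unfold Rdiv. rewrite Rminus_diag. ring.
    - rewrite IHN. field. auto. }
  assert (SumGe : forall N, INR N * kap <= ssum (fun j => (s (S j) - s j) / D0) N).
  { induction N; simpl ssum.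
    - simpl. lra.
    - rewrite S_INR. pose proof (Claim N). lra. }
  assert (HD0a : 0 < Rabs D0) by (apply Rabs_pos_lt; auto).
  destruct (INR_archimed (kap * Rabs D0) (d - c)) as [N HN].
  { apply Rmult_lt_0_compat; auto. }
  specialize (SumGe N). rewrite Sum in SumGe.
  assert (Bn : Rabs (s N - s 0%nat) < d - c).
  { pose proof (Sb N). pose proof (Sb 0%nat). unfold Rabs; destruct (Rcase_abs _); lra. }
  assert (Eq : s N - s 0%nat = D0 * ((s N - s 0%nat) / D0)) by (field; auto).
  rewrite Eq, Rabs_mult in Bn.
  assert (INR N * kap <= Rabs ((s N - s 0%nat) / D0)).
  { eapply Rle_trans; [exact SumGe|apply Rle_abs]. }
  assert (Rabs D0 * (INR N * kap) <= Rabs D0 * Rabs ((s N - s 0%nat) / D0)).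
  { apply Rmult_le_compat_l; lra. }
  nra.
Qed.

End Kop.

Lemma inv_sym f g : inverse_on_I f g -> inverse_on_I g f.
Proof. intros [A1 [A2 [A3 A4]]]. split; [exact A2|split; [exact A1|split; [exact A4|exact A3]]]. Qed.

Lemma inv_incr f g : inverse_on_I f g -> incr_I f -> incr_I g.
Proof.
  intros [A1 [A2 [A3 A4]]] I x y Hx Hy Hxy.
  destruct (Rlt_or_le (g x) (g y)) as [?|N]; auto. exfalso.
  assert (f (g y) <= f (g x)) by (apply incr_le; auto).
  rewrite !A4 in H by auto. lra.
Qed.

Lemma fix01 f g : inverse_on_I f g -> incr_I f -> f 0 = 0 /\ f 1 = 1.
Proof.
  intros [A1 [A2 [A3 A4]]] I.
  assert (I0 : inI 0) by (unfold inI; lra). assert (I1 : inI 1) by (unfold inI; lra).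
  split.
  - assert (f 0 <= f (g 0)) by (apply incr_le; auto; specialize (A2 0 I0); unfold inI in *; lra).
    rewrite A4 in H by auto. specialize (A1 0 I0). unfold inI in *. lra.
  - assert (f (g 1) <= f 1) by (apply incr_le; auto; specialize (A2 1 I1); unfold inI in *; lra).
    rewrite A4 in H by auto. specialize (A1 1 I1). unfold inI in *. lra.
Qed.

Lemma fiter_lt f : incr_I f -> presI f -> forall y, inI y -> f y < y ->
  forall k, fiter (S k) f y < y.
Proof.
  intros I P y Hy Hf. induction k; simpl in *; auto.
  apply Rle_lt_trans with (f y); auto.
  apply incr_le; auto. apply (fiter_I f P (S k)); auto. lra.
Qed.

Lemma fiter_gt f : incr_I f -> presI f -> forall y, inI y -> y < f y ->
  forall k, y < fiter (S k) f y.
Proof.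
  intros I P y Hy Hf. induction k; simpl in *; auto.
  apply Rlt_le_trans with (f y); auto.
  apply incr_le; auto. apply (fiter_I f P (S k)); auto. lra.
Qed.

Lemma fiter_fix f y : f y = y -> forall k, fiter k f y = y.
Proof. intros E k; induction k; simpl; auto. rewrite IHk; auto. Qed.

Lemma fix_back f : incr_I f -> presI f -> forall y k, inI y -> fiter (S k) f y = y -> f y = y.
Proof.
  intros I P y k Hy E.
  destruct (Rtotal_order (f y) y) as [L|[L|L]]; auto.
  - pose proof (fiter_lt f I P y Hy L k); lra.
  - pose proof (fiter_gt f I P y Hy L k); lra.
Qed.

Lemma fiter_inv f g : inverse_on_I f g -> forall k z, inI z -> fiter k g (fiter k f z) = z.
Proof.
  intros Hi. pose proof Hi as [A1 [A2 [A3 A4]]].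
  induction k; intros z Hz; [simpl; auto|].
  change (fiter (S k) f z) with (f (fiter k f z)). rewrite fiter_S'.
  rewrite A3 by (apply fiter_I; auto). apply IHk; auto.
Qed.

Lemma comm_inv f g F : inverse_on_I f g -> presI F ->
  (forall y, inI y -> f (F y) = F (f y)) -> forall y, inI y -> g (F y) = F (g y).
Proof.
  intros [A1 [A2 [A3 A4]]] PF C y Hy.
  rewrite <- (A4 y Hy) at 1. rewrite <- C by auto. rewrite A3; auto.
Qed.

Lemma contI_comp f g x : inI x -> contI f x -> contI g (f x) -> presI f -> contI (fun t => g (f t)) x.
Proof.
  intros Hx Cf Cg P eps Heps.
  destruct (Cg eps Heps) as [d1 [Hd1 K1]].
  destruct (Cf d1 Hd1) as [d2 [Hd2 K2]].
  exists d2; split; auto.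
Qed.

Lemma sign_const phi a b : (forall y, inI y -> contI phi y) -> inI a -> inI b ->
  (forall y, a < y < b -> phi y <> y) ->
  forall y1 y2, a < y1 < b -> a < y2 < b -> phi y1 < y1 -> y2 < phi y2 -> False.
Proof.
  intros C Ia Ib Nf y1 y2 H1 H2 L1 L2.
  set (psi := fun t => phi t - t).
  assert (Cp : forall y, inI y -> contI psi y).
  { intros y Hy eps Heps. destruct (C y Hy (eps / 2)) as [d [Hd K]]; [lra|].
    exists (Rmin d (eps / 2)). split; [apply Rmin_glb_lt; lra|].
    intros z Hz Hzd. unfold psi.
    assert (Rabs (z - y) < d) by (eapply Rlt_le_trans; [exact Hzd|apply Rmin_l]).
    assert (Rabs (z - y) < eps / 2) by (eapply Rlt_le_trans; [exact Hzd|apply Rmin_r]).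
    specialize (K z Hz H).
    replace (phi z - z - (phi y - y)) with ((phi z - phi y) - (z - y)) by ring.
    eapply Rle_lt_trans; [apply Rabs_triang|]. rewrite Rabs_Ropp. lra. }
  assert (Cont : continuity (fun t => psi (clamp t))) by (intro t; apply clamp_cont; auto).
  assert (IN : forall y, a <= y <= b -> inI y) by (intros; unfold inI in *; lra).
  destruct (Rtotal_order y1 y2) as [L|[L|L]].
  - destruct (IVT (fun t => psi (clamp t)) y1 y2 Cont L) as [z [Hz E]].
    + rewrite clamp_id by (apply IN; lra). unfold psi; lra.
    + rewrite clamp_id by (apply IN; lra). unfold psi; lra.
    + rewrite clamp_id in E by (apply IN; lra). unfold psi in E.
      apply (Nf z); lra.
  - subst; lra.
  - destruct (IVT (fun t => - psi (clamp t)) y2 y1) as [z [Hz E]]; auto.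
    + intro t. apply continuity_pt_opp. apply Cont.
    + rewrite clamp_id by (apply IN; lra). unfold psi; lra.
    + rewrite clamp_id by (apply IN; lra). unfold psi; lra.
    + rewrite clamp_id in E by (apply IN; lra). unfold psi in E.
      apply (Nf z); lra.
Qed.

Lemma left_end phi K x : presI phi -> (forall u v, inI u -> inI v -> Rabs (phi u - phi v) <= K * Rabs (u - v)) ->
  phi 0 = 0 -> inI x -> phi x <> x ->
  exists a, 0 <= a < x /\ phi a = a /\ forall y, a < y <= x -> phi y <> y.
Proof.
  intros P Lip H0 Hx Nx.
  set (E := fun y => 0 <= y <= x /\ phi y = y).
  assert (Bd : bound E) by (exists x; intros y [Hy _]; lra).
  assert (Ne : exists y, E y) by (exists 0; split; auto; unfold inI in *; lra).
  destruct (completeness E Bd Ne) as [a [Ub Lub]].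
  assert (Ha0 : 0 <= a) by (apply Ub; split; auto; unfold inI in *; lra).
  assert (Hax : a <= x) by (apply Lub; intros y [Hy _]; lra).
  assert (Ia : inI a) by (unfold inI in *; lra).
  assert (K0 : 0 <= K).
  { specialize (Lip 0 1 ltac:(unfold inI; lra) ltac:(unfold inI; lra)).
    rewrite Rminus_0_l, Rabs_Ropp, Rabs_R1, Rmult_1_r in Lip.
    pose proof (Rabs_pos (phi 0 - phi 1)). lra. }
  assert (Fa : phi a = a).
  { apply Rminus_diag_uniq. apply Rabs_eq_0.
    destruct (Rle_lt_or_eq_dec 0 (Rabs (phi a - a)) (Rabs_pos _)) as [Hp|Hp]; [|auto].
    exfalso. set (e := Rabs (phi a - a) / (K + 1)).
    assert (He : 0 < e) by (unfold e; apply Rdiv_lt_0_compat; lra).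
    assert (Ex : exists y, E y /\ a - e < y).
    { destruct (Classical_Prop.classic (exists y, E y /\ a - e < y)) as [?|N]; auto.
      exfalso. assert (a <= a - e).
      { apply Lub. intros y Ey. destruct (Rle_or_lt y (a - e)) as [?|Q]; auto.
        exfalso; apply N; exists y; auto. }
      lra. }
    destruct Ex as [y [[Hy Fy] Hye]].
    assert (Hya : y <= a) by (apply Ub; split; auto).
    assert (Iy : inI y) by (unfold inI in *; lra).
    specialize (Lip a y Ia Iy). rewrite Fy in Lip.
    assert (Rabs (a - y) < e) by (rewrite Rabs_right; lra).
    assert (K * Rabs (a - y) <= K * e) by (apply Rmult_le_compat_l; lra).
    assert (Rabs (phi a - a) <= Rabs (phi a - y) + Rabs (y - a)).
    { replace (phi a - a) with ((phi a - y) + (y - a)) by ring. apply Rabs_triang. }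
    rewrite (Rabs_minus_sym y a) in H2.
    assert (Rabs (phi a - a) < (K + 1) * e) by lra.
    unfold e in H3. replace ((K + 1) * (Rabs (phi a - a) / (K + 1))) with (Rabs (phi a - a)) in H3
      by (field; lra). lra. }
  exists a. split; [split; auto|]; [|split; auto].
  - destruct Hax as [?|Q]; auto. subst. contradiction.
  - intros y Hy Fy. assert (y <= a) by (apply Ub; split; auto; lra). lra.
Qed.

Lemma right_end phi K x : presI phi -> (forall u v, inI u -> inI v -> Rabs (phi u - phi v) <= K * Rabs (u - v)) ->
  phi 1 = 1 -> inI x -> phi x <> x ->
  exists b, x < b <= 1 /\ phi b = b /\ forall y, x <= y < b -> phi y <> y.
Proof.
  intros P Lip H1 Hx Nx.
  set (rho := fun y => 1 - phi (1 - y)).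
  assert (IR : forall y, inI y -> inI (1 - y)) by (intros; unfold inI in *; lra).
  destruct (left_end rho K (1 - x)) as [a' [Ha' [Fa' Na']]].
  - intros y Hy. unfold rho. specialize (P (1 - y) (IR y Hy)). unfold inI in *; lra.
  - intros u v Hu Hv. unfold rho.
    replace (1 - phi (1 - u) - (1 - phi (1 - v))) with (- (phi (1 - u) - phi (1 - v))) by ring.
    rewrite Rabs_Ropp. replace (u - v) with (- ((1 - u) - (1 - v))) by ring. rewrite Rabs_Ropp.
    apply Lip; auto.
  - unfold rho. replace (1 - 0) with 1 by ring. rewrite H1; ring.
  - auto.
  - unfold rho. replace (1 - (1 - x)) with x by ring. lra.
  - exists (1 - a'). split; [lra|]. split.
    + unfold rho in Fa'. lra.
    + intros y Hy Fy. apply (Na' (1 - y)); [lra|]. unfold rho. replace (1 - (1 - y)) with y by ring. lra.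
Qed.

Definition Good1 (f : R -> R) : Prop :=
  presI f /\ incr_I f /\ forall c, inI c -> exists l, SD f c l.

Lemma Good1_comp f g : Good1 f -> Good1 g -> Good1 (fun x => g (f x)).
Proof.
  intros [Pf [If Sf]] [Pg [Ig Sg]]. split; [|split].
  - intros x Hx. apply Pg, Pf, Hx.
  - intros x y Hx Hy Hxy. apply Ig; [apply Pf; auto|apply Pf; auto|apply If; auto].
  - intros c Hc. destruct (Sf c Hc) as [l Hl]. destruct (Sg (f c) (Pf c Hc)) as [m Hm].
    exists (m * l). apply (SD_comp f g c l m); auto. apply incr_inj; auto.
Qed.

Lemma SD_contI f c l : inI c -> SD f c l -> contI f c.
Proof.
  intros Hc H eps Heps. destruct (SD_lip f c l Hc H) as [d [Hd K]].
  set (M := Rabs l + 1). assert (HM : 0 < M) by (unfold M; pose proof (Rabs_pos l); lra).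
  exists (Rmin d (eps / M)). split.
  { apply Rmin_glb_lt; auto. apply Rdiv_lt_0_compat; auto. }
  intros y Hy Hyd.
  assert (A1 : Rabs (y - c) < d) by (eapply Rlt_le_trans; [exact Hyd|apply Rmin_l]).
  assert (A2 : Rabs (y - c) < eps / M) by (eapply Rlt_le_trans; [exact Hyd|apply Rmin_r]).
  eapply Rle_lt_trans; [apply K; auto|]. fold M.
  apply Rlt_le_trans with (M * (eps / M)).
  { apply Rmult_lt_compat_l; auto. }
  right; field; lra.
Qed.

Lemma Good1_contI f : Good1 f -> forall c, inI c -> contI f c.
Proof. intros [_ [_ S]] c Hc. destruct (S c Hc) as [l Hl]. eapply SD_contI; eauto. Qed.

Lemma C2_Good1 f : C2_on_I f -> presI f -> incr_I f -> Good1 f.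
Proof.
  intros C P I. split; [auto|split; [auto|]].
  destruct (C2_unpack f C) as [f1 [D1 [K1 _]]].
  intros c Hc. exists (f1 c). apply C1_SD; auto.
Qed.

Lemma Pab_map phi a b : incr_I phi -> inI a -> inI b -> phi a = a -> phi b = b ->
  forall y, a < y < b -> a < phi y < b.
Proof.
  intros I Ia Ib Fa Fb y Hy. assert (inI y) by (unfold inI in *; lra).
  split; [rewrite <- Fa at 1|rewrite <- Fb at 1]; apply I; auto; lra.
Qed.

Lemma iter_cmp P Q a b : incr_I P -> incr_I Q -> inI a -> inI b ->
  P a = a -> P b = b -> Q a = a -> Q b = b ->
  (forall y, a < y < b -> P y < Q y) ->
  forall k y, a < y < b -> fiter (S k) P y < fiter (S k) Q y.
Proof.
  intros IP IQ Ia Ib Pa Pb Qa Qb PQ.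
  assert (G : forall k y, a < y < b -> a < fiter k P y < b /\ a < fiter k Q y < b /\
                                         fiter k P y <= fiter k Q y).
  { induction k; intros y Hy; simpl; [lra|].
    destruct (IHk y Hy) as [B1 [B2 B3]].
    split; [apply Pab_map; auto|split; [apply Pab_map; auto|]].
    apply Rle_trans with (Q (fiter k P y)).
    - left; apply PQ; auto.
    - apply incr_le; auto; unfold inI in *; lra. }
  intros k y Hy. destruct (G k y Hy) as [B1 [B2 B3]]. simpl.
  apply Rle_lt_trans with (P (fiter k Q y)).
  - apply incr_le; auto; unfold inI in *; lra.
  - apply PQ; auto.
Qed.

Lemma kop_good phi psi (n : nat) W a b lam p : good phi psi -> (0 < n)%nat -> inI a -> inI b ->
  phi a = a -> (forall y, a < y < b -> phi y < y) ->
  (forall y, a < y < b -> a < W y < b) ->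
  (forall y z, a < y -> y < z -> z < b -> W y < W z) ->
  (forall y, a < y < b -> W (fiter n phi y) = fiter n phi (W y)) ->
  SD W a lam -> a < p < b -> W p = p -> forall y, a < y < b -> W y = y.
Proof.
  intros G Hn Ia Ib Fa Dn Wab Wincr Wcomm WSD Hp Wp.
  pose proof G as [[P1 [P2 [P3 P4]]] [C1 [C2 Ip]]].
  destruct (good_DIST phi psi G) as [L [HL D]].
  destruct (fiter_DIST phi L D HL Ip P1 n) as [L' [HL' D']].
  eapply (kopell_main (fiter n phi) L' a b Ia Ib (fiter_incr phi Ip P1 n) (fiter_I phi P1 n) D' HL').
  - intros y Hy. assert (Iy : inI y) by (unfold inI in *; lra).
    destruct n as [|n']; [lia|]. split.
    + rewrite <- (fiter_fix phi a Fa (S n')) at 1. apply (fiter_incr phi Ip P1); auto; lra.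
    + apply (fiter_lt phi Ip P1 y Iy (Dn y Hy)).
  - exact Wab.
  - exact Wincr.
  - exact Wcomm.
  - exact WSD.
  - exact Hp.
  - exact Wp.
Qed.

Theorem lemma5p7 (m n : nat) (g h ginv : R -> R) :
  (0 < m)%nat -> (0 < n)%nat ->
  orient_pres_C2_diffeo g -> orient_pres_C2_diffeo h ->
  inverse_on_I g ginv ->
  (forall x, inI x -> g (fiter m h (ginv x)) = fiter n h x) ->
  forall x, inI x -> h (g (h (ginv x))) = g (h (ginv (h x))).
Proof.
  intros Hm Hn [[gi [Hgi [Cg Cgi]]] Ig] [[hi [Hhi [Ch Chi]]] Ih] Hginv Hrel.
  pose proof Hgi as [Pg [Pgi [Egi1 Egi2]]].
  pose proof Hhi as [Ph [Phi [Ehi1 Ehi2]]].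
  pose proof Hginv as [_ [Pginv [Eg1 Eg2]]].
  assert (Igi := inv_incr g gi Hgi Ig).
  assert (Ihi := inv_incr h hi Hhi Ih).
  assert (Iginv := inv_incr g ginv Hginv Ig).
  assert (Gh : good h hi) by (split; [exact Hhi|split; [exact Ch|split; [exact Chi|exact Ih]]]).
  assert (Ghi : good hi h) by (split; [exact (inv_sym _ _ Hhi)|split; [exact Chi|split; [exact Ch|exact Ihi]]]).
  assert (G1g := C2_Good1 g Cg Pg Ig).
  assert (G1h := C2_Good1 h Ch Ph Ih).
  assert (G1hi := C2_Good1 hi Chi Phi Ihi).
  assert (G1gi := C2_Good1 gi Cgi Pgi Igi).
  assert (G1ginv : Good1 ginv).
  { split; [exact Pginv|split; [exact Iginv|]].
    intros c Hc. destruct G1gi as [_ [_ S]]. destruct (S c Hc) as [l Hl]. exists l.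
    eapply SD_ext; [|exact Hl]. intros y Hy. rewrite <- (Eg2 y Hy) at 1. apply Egi1. auto. }
  set (f := fun y => g (h (ginv y))).
  set (vinv := fun y => g (hi (ginv y))).
  set (u := fun y => h (f (hi y))).
  set (W := fun y => vinv (u y)).
  assert (G1f : Good1 f) by exact (Good1_comp ginv (fun y => g (h y)) G1ginv (Good1_comp h g G1h G1g)).
  assert (G1v : Good1 vinv) by exact (Good1_comp ginv (fun y => g (hi y)) G1ginv (Good1_comp hi g G1hi G1g)).
  assert (G1u : Good1 u) by exact (Good1_comp hi (fun y => h (f y)) G1hi (Good1_comp f h G1f G1h)).
  assert (G1W : Good1 W) by exact (Good1_comp u vinv G1u G1v).
  destruct G1f as [Pf [If _]]. destruct G1v as [Pv [Iv _]]. destruct G1u as [Pu [Iu _]].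
  assert (PW : presI W) by apply G1W. assert (IW : incr_I W) by apply G1W.
  assert (Finv : inverse_on_I f vinv).
  { split; [exact Pf|split; [exact Pv|split]].
    - intros y Hy. unfold f, vinv. rewrite Eg1 by (apply Ph; auto). rewrite Ehi1 by auto. apply Eg2; auto.
    - intros y Hy. unfold f, vinv. rewrite Eg1 by (apply Phi; auto). rewrite Ehi2 by auto. apply Eg2; auto. }
  pose proof Finv as [_ [_ [Ef1 Ef2]]].
  assert (fk : forall k y, inI y -> fiter k f y = g (fiter k h (ginv y))).
  { induction k; intros y Hy; simpl; [rewrite Eg2; auto|].
    rewrite IHk by auto. unfold f. rewrite Eg1; auto. apply fiter_I; auto. }
  assert (Fm : forall y, inI y -> fiter m f y = fiter n h y).
  { intros y Hy. rewrite fk by auto. apply Hrel; auto. }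
  set (F := fiter n h) in *.
  assert (PF : presI F) by (apply fiter_I; auto).
  assert (cH : forall y, inI y -> h (F y) = F (h y)).
  { intros y Hy. unfold F. change (h (fiter n h y)) with (fiter (S n) h y). apply fiter_S'. }
  assert (cF : forall y, inI y -> f (F y) = F (f y)).
  { intros y Hy. rewrite <- Fm by auto. rewrite <- Fm by (apply Pf; auto).
    change (f (fiter m f y)) with (fiter (S m) f y). apply fiter_S'. }
  assert (cHi := comm_inv h hi F Hhi PF cH).
  assert (cV := comm_inv f vinv F Finv PF cF).
  assert (cW : forall y, inI y -> W (F y) = F (W y)).
  { intros y Hy. unfold W, u.
    rewrite cHi by auto. rewrite cF by (apply Phi; auto). rewrite cH by (apply Pf, Phi; auto).
    rewrite cV by (apply Ph, Pf, Phi; auto). auto. }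
  set (Fi := fiter n hi).
  assert (FFi : inverse_on_I F Fi).
  { split; [exact PF|split; [apply fiter_I; auto|split]].
    - intros y Hy. apply (fiter_inv h hi Hhi n y Hy).
    - intros y Hy. apply (fiter_inv hi h (inv_sym _ _ Hhi) n y Hy). }
  assert (cWi : forall y, inI y -> W (Fi y) = Fi (W y)).
  { intros y Hy. symmetry. apply (comm_inv F Fi W FFi PW); auto.
    intros z Hz. symmetry. apply cW; auto. }
  intros x Hx.
  change (h (f x) = f (h x)).
  destruct (Req_dec (h x) x) as [Ehx|Nhx].
  { assert (FX : F x = x) by (apply fiter_fix; auto).
    assert (Hfx : f x = x).
    { destruct m as [|m']; [lia|]. apply (fix_back f If Pf x m' Hx). rewrite Fm; auto. }
    rewrite Hfx, Ehx, Hfx. reflexivity. }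
  destruct (good_DIST h hi Gh) as [Lh [HLh Dh]].
  assert (Lip := H_lip h Lh Dh Ph Ih).
  destruct (fix01 h hi Hhi Ih) as [h0 h1].
  destruct (left_end h (exp Lh) x Ph Lip h0 Hx Nhx) as [a [Hax [Fa Na]]].
  destruct (right_end h (exp Lh) x Ph Lip h1 Hx Nhx) as [b [Hxb [Fb Nb]]].
  assert (Ia : inI a) by (unfold inI in *; lra).
  assert (Ib : inI b) by (unfold inI in *; lra).
  assert (NF : forall y, a < y < b -> h y <> y).
  { intros y Hy. destruct (Rle_or_lt y x). apply Na; lra. apply Nb; lra. }
  assert (Fixes : forall c, inI c -> h c = c -> hi c = c /\ f c = c /\ vinv c = c /\ u c = c /\ W c = c).
  { intros c Hc Hhc.
    assert (hic : hi c = c) by (rewrite <- Hhc at 1; apply Ehi1; auto).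
    assert (fc : f c = c).
    { destruct m as [|m']; [lia|]. apply (fix_back f If Pf c m' Hc). rewrite Fm by auto.
      apply fiter_fix; auto. }
    assert (vc : vinv c = c) by (rewrite <- fc at 1; apply Ef1; auto).
    assert (uc : u c = c) by (unfold u; rewrite hic, fc; auto).
    repeat split; auto. unfold W. rewrite uc; auto. }
  destruct (Fixes a Ia Fa) as [hia [fa [va [ua Wa]]]].
  destruct (Fixes b Ib Fb) as [hib [fb [vb [ub Wb]]]].
  assert (IN : forall y, a < y < b -> inI y) by (intros; unfold inI in *; lra).
  assert (Dir : (forall y, a < y < b -> h y < y) \/ (forall y, a < y < b -> y < h y)).
  { assert (SC := sign_const h a b (Good1_contI h G1h) Ia Ib NF).
    assert (Hxab : a < x < b) by lra.
    destruct (Rlt_or_le (h x) x) as [Lx|Lx].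
    - left. intros y Hy. destruct (Rtotal_order (h y) y) as [?|[E|G]]; auto.
      + exfalso; apply (NF y Hy E).
      + exfalso; apply (SC x y Hxab Hy Lx G).
    - right. assert (Lx' : x < h x) by (destruct Lx; auto; exfalso; apply Nhx; auto).
      intros y Hy. destruct (Rtotal_order (h y) y) as [G|[E|?]]; auto.
      + exfalso; apply (SC y x Hy Hxab G Lx').
      + exfalso; apply (NF y Hy E). }
  assert (Wab := Pab_map W a b IW Ia Ib Wa Wb).
  assert (Wincr : forall y z, a < y -> y < z -> z < b -> W y < W z).
  { intros y z H1 H2 H3. apply IW; auto; apply IN; lra. }
  destruct G1W as [_ [_ SW]]. destruct (SW a Ia) as [lam Hlam].
  destruct (classic (exists p, a < p < b /\ W p = p)) as [[p [Hp Wp]]|NoFix].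
  - assert (Wid : forall y, a < y < b -> W y = y).
    { destruct Dir as [Dl|Dr].
      - refine (kop_good h hi n W a b lam p Gh Hn Ia Ib Fa Dl Wab Wincr _ Hlam Hp Wp).
        intros y Hy. apply cW; auto.
      - refine (kop_good hi h n W a b lam p Ghi Hn Ia Ib hia _ Wab Wincr _ Hlam Hp Wp).
        + intros y Hy. assert (Hz := Pab_map hi a b Ihi Ia Ib hia hib y Hy).
          specialize (Dr (hi y) Hz). rewrite Ehi2 in Dr by auto. lra.
        + intros y Hy. apply cWi; auto. }
    assert (Hy := Pab_map h a b Ih Ia Ib Fa Fb x ltac:(lra)).
    specialize (Wid (h x) Hy). unfold W, u in Wid. rewrite Ehi1 in Wid by auto.
    assert (Ihf : inI (h (f x))) by (apply Ph, Pf; auto).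
    rewrite <- (Ef2 (h (f x)) Ihf). f_equal. exact Wid.
  - assert (NoF : forall y, a < y < b -> W y <> y).
    { intros y Hy E. apply NoFix. exists y; auto. }
    assert (SC := sign_const W a b (Good1_contI W (conj PW (conj IW SW))) Ia Ib NoF).
    assert (uk : forall k y, inI y -> fiter k u y = h (fiter k f (hi y))).
    { induction k; intros y Hy; simpl; [rewrite Ehi2; auto|].
      rewrite IHk by auto. unfold u. rewrite Ehi1; auto. apply (fiter_I f Pf k); apply Phi; auto. }
    assert (Eq : forall y, a < y < b -> fiter m u y = fiter m f y).
    { intros y Hy. assert (Iy := IN y Hy). rewrite uk by auto. rewrite !Fm by (auto; apply Phi; auto).
      rewrite cH by (apply Phi; auto). rewrite Ehi2; auto. }
    assert (Hxab : a < x < b) by lra.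
    destruct m as [|m']; [lia|].
    destruct (Rlt_or_le (W x) x) as [Lx|Lx].
    + assert (Dn : forall y, a < y < b -> u y < f y).
      { intros y Hy.
        assert (Wy : W y < y).
        { destruct (Rtotal_order (W y) y) as [?|[E|G]]; auto.
          - exfalso; apply (NoF y Hy E).
          - exfalso; apply (SC x y Hxab Hy Lx G). }
        assert (f (W y) < f y) by (apply If; auto; apply IN; auto).
        unfold W in H. rewrite Ef2 in H; auto. }
      pose proof (iter_cmp u f a b Iu If Ia Ib ua ub fa fb Dn m' x Hxab).
      rewrite Eq in H; auto. lra.
    + assert (Lx' : x < W x) by (destruct Lx; auto; exfalso; apply (NoF x Hxab); auto).
      assert (Up : forall y, a < y < b -> f y < u y).
      { intros y Hy.
        assert (Wy : y < W y).
        { destruct (Rtotal_order (W y) y) as [G|[E|?]]; auto.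
          - exfalso; apply (SC y x Hy Hxab G Lx').
          - exfalso; apply (NoF y Hy E). }
        assert (f y < f (W y)) by (apply If; auto; apply IN; auto).
        unfold W in H. rewrite Ef2 in H; auto. }
      pose proof (iter_cmp f u a b If Iu Ia Ib fa fb ua ub Up m' x Hxab).
      rewrite Eq in H; auto. lra.
Qed.
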